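(* Let $G$ be a countably infinite locally finite group. For every nondecreasing function $f\colon\mathbb{R}_+\to\mathbb{R}_+$ with $\lim_{x\to\infty}f(x)=\infty$ there exists a proper left invariant metric $d_G$ on $G$ such that $f$ is not a $0$-dimensional control function of $(G,d_G)$.
   Context: A group is locally finite if every finitely generated subgroup is finite. A metric $d_G$ on $G$ is proper left invariant if $d_G(gh,gk)=d_G(h,k)$ for all $g,h,k$ and every ball contains finitely many elements. For $s>0$, an $s$-scale chain is a finite sequence $x_0,\dots,x_m$ with $d(x_i,x_{i+1})<s$; the $s$-scale connected components of $X$ are the classes of the relation ''joined by an $s$-scale chain''. A function $f$ is a $0$-dimensional control function of $(X,d)$ if for every $s>0$ every $s$-scale connected component of $X$ has diameter at most $f(s)$. *)

(* Defs.v *)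
From Stdlib Require Import Reals List.
Open Scope R_scope.

Record Group := {
  carrier :> Type;
  gmul : carrier -> carrier -> carrier;
  gone : carrier;
  ginv : carrier -> carrier;
  gmul_assoc : forall a b c, gmul a (gmul b c) = gmul (gmul a b) c;
  gmul_1l : forall a, gmul gone a = a;
  gmul_1r : forall a, gmul a gone = a;
  gmul_Vl : forall a, gmul (ginv a) a = gone;
  gmul_Vr : forall a, gmul a (ginv a) = gone
}.

Definition finite_set {T : Type} (P : T -> Prop) : Prop :=
  exists l : list T, forall x, P x -> In x l.

Definition countably_infinite (T : Type) : Prop :=
  exists e : nat -> T, (forall m n, e m = e n -> m = n) /\ (forall x, exists n, e n = x).

Inductive gen (G : Group) (S : list G) : G -> Prop :=
  | gen_in : forall x, In x S -> gen G S x
  | gen_one : gen G S (gone G)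
  | gen_mul : forall x y, gen G S x -> gen G S y -> gen G S (gmul G x y)
  | gen_inv : forall x, gen G S x -> gen G S (ginv G x).

Definition locally_finite (G : Group) : Prop :=
  forall S : list G, finite_set (gen G S).

Definition is_metric {X : Type} (d : X -> X -> R) : Prop :=
  (forall x y, 0 <= d x y) /\
  (forall x y, d x y = 0 <-> x = y) /\
  (forall x y, d x y = d y x) /\
  (forall x y z, d x z <= d x y + d y z).

Definition proper_left_invariant_metric (G : Group) (d : G -> G -> R) : Prop :=
  is_metric d /\
  (forall g h k, d (gmul G g h) (gmul G g k) = d h k) /\
  (forall x r, finite_set (fun y => d x y <= r)).

Inductive scale_chain {X : Type} (d : X -> X -> R) (s : R) : X -> X -> Prop :=
  | chain_refl : forall x, scale_chain d s x x
  | chain_step : forall x y z, d x y < s -> scale_chain d s y z -> scale_chain d s x z.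

(* f is a 0-dimensional control function of (X,d): for every s > 0, every
   s-scale connected component has diameter at most f s, i.e. any two points
   in the same s-scale component are at distance at most f s. *)
Definition zero_dim_control {X : Type} (d : X -> X -> R) (f : R -> R) : Prop :=
  forall s, 0 < s -> forall x y, scale_chain d s x y -> d x y <= f s.

(* Main.v *)
Require Import Defs.
From Stdlib Require Import Reals List Lia ClassicalEpsilon Classical Arith Lra.
Open Scope R_scope.

Lemma g_inv_unique (G : Group) (a b : G) : gmul G a b = gone G -> b = ginv G a.
Proof.
  intro H. rewrite <- (gmul_1l G b). rewrite <- (gmul_Vl G a).
  rewrite <- gmul_assoc, H, gmul_1r. reflexivity.
Qed.

Lemma g_inv_mul (G : Group) (a b : G) : ginv G (gmul G a b) = gmul G (ginv G b) (ginv G a).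
Proof.
  symmetry. apply g_inv_unique.
  rewrite gmul_assoc, <- (gmul_assoc G a b), gmul_Vr, gmul_1r, gmul_Vr. reflexivity.
Qed.

Lemma g_inv_inv (G : Group) (a : G) : ginv G (ginv G a) = a.
Proof. symmetry. apply g_inv_unique. apply gmul_Vl. Qed.

Lemma g_inv_one (G : Group) : ginv G (gone G) = gone G.
Proof. symmetry. apply g_inv_unique. apply gmul_1l. Qed.

Lemma g_cancel_l (G : Group) (a b : G) : gmul G (ginv G a) (gmul G a b) = b.
Proof. rewrite gmul_assoc, gmul_Vl, gmul_1l. reflexivity. Qed.

Lemma g_cancel_l' (G : Group) (a b : G) : gmul G a (gmul G (ginv G a) b) = b.
Proof. rewrite gmul_assoc, gmul_Vr, gmul_1l. reflexivity. Qed.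

Fixpoint prod (G : Group) (ws : list G) : G :=
  match ws with nil => gone G | a :: r => gmul G a (prod G r) end.

Fixpoint wsum (G : Group) (w : G -> nat) (ws : list G) : nat :=
  match ws with nil => 0%nat | a :: r => (w a + wsum G w r)%nat end.

Lemma prod_app (G : Group) (a b : list G) : prod G (a ++ b) = gmul G (prod G a) (prod G b).
Proof. induction a; simpl. now rewrite gmul_1l. now rewrite IHa, gmul_assoc. Qed.

Lemma wsum_app (G : Group) w (a b : list G) : wsum G w (a ++ b) = (wsum G w a + wsum G w b)%nat.
Proof. induction a; simpl; lia. Qed.

Lemma prod_inv (G : Group) (a : list G) : prod G (rev (map (ginv G) a)) = ginv G (prod G a).
Proof.
  induction a; simpl. now rewrite g_inv_one.
  rewrite prod_app, IHa, g_inv_mul. simpl. now rewrite gmul_1r.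
Qed.

Lemma wsum_inv (G : Group) w (Hw : forall g, w (ginv G g) = w g) (a : list G) :
  wsum G w (rev (map (ginv G) a)) = wsum G w a.
Proof. induction a; simpl; auto. rewrite wsum_app, IHa. simpl. rewrite Hw. lia. Qed.

Definition Wt (G : Group) w (x : G) (k : nat) := exists ws, prod G ws = x /\ wsum G w ws = k.

Lemma min_exists (P : nat -> Prop) : (exists n, P n) -> exists n, P n /\ forall m, P m -> (n <= m)%nat.
Proof.
  intros [n Hn]. apply NNPP. intro Hc.
  assert (forall k, forall m, (m <= k)%nat -> ~ P m).
  { induction k; intros m Hm HP.
    - apply Hc. exists m. split; auto. intros. lia.
    - apply Hc. exists m. split; auto. intros j Hj.
      destruct (le_lt_dec m j); auto. exfalso. apply (IHk j); auto; lia. }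
  apply (H n n); auto.
Qed.

Definition ell (G : Group) w (x : G) : nat :=
  epsilon (inhabits 0%nat) (fun k => Wt G w x k /\ forall j, Wt G w x j -> (k <= j)%nat).

Lemma ell_spec (G : Group) w x : Wt G w x (ell G w x) /\ forall j, Wt G w x j -> (ell G w x <= j)%nat.
Proof.
  unfold ell. apply epsilon_spec. apply min_exists.
  exists (w x + 0)%nat. exists (x :: nil). simpl. rewrite gmul_1r. auto.
Qed.

Definition gdist (G : Group) w (g h : G) : R := INR (ell G w (gmul G (ginv G g) h)).

Lemma ell_inv (G : Group) w (Hw : forall g, w (ginv G g) = w g) x : (ell G w (ginv G x) <= ell G w x)%nat.
Proof.
  destruct (ell_spec G w x) as [[ws [H1 H2]] _].
  apply (ell_spec G w (ginv G x)). exists (rev (map (ginv G) ws)).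
  rewrite prod_inv, wsum_inv; subst; auto.
Qed.

Lemma ell_mul (G : Group) w x y : (ell G w (gmul G x y) <= ell G w x + ell G w y)%nat.
Proof.
  destruct (ell_spec G w x) as [[ws [H1 H2]] _].
  destruct (ell_spec G w y) as [[vs [H3 H4]] _].
  apply (ell_spec G w). exists (ws ++ vs). rewrite prod_app, wsum_app. subst; auto.
Qed.

Lemma ell_zero (G : Group) w (Hw1 : forall g, (1 <= w g)%nat) x : ell G w x = 0%nat <-> x = gone G.
Proof.
  split.
  - intro H. destruct (ell_spec G w x) as [[ws [H1 H2]] _].
    destruct ws as [|a r]; simpl in *. auto. specialize (Hw1 a). lia.
  - intro; subst. destruct (ell_spec G w (gone G)) as [_ H].
    specialize (H 0%nat). assert (Wt G w (gone G) 0). exists nil. simpl; auto. specialize (H H0). lia.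
Qed.

Fixpoint words {T} (B : list T) (k : nat) : list (list T) :=
  match k with
  | O => nil :: nil
  | S k => flat_map (fun w => map (fun b => b :: w) B) (words B k)
  end.

Lemma words_length {T} (B : list T) k : length (words B k) = (length B ^ k)%nat.
Proof.
  induction k; simpl; auto. rewrite (flat_map_constant_length (c := length B)).
  rewrite IHk. lia. intros. apply length_map.
Qed.

Lemma words_pad (G : Group) (B : list G) (H1 : In (gone G) B) k : forall ws,
  (forall a, In a ws -> In a B) -> (length ws <= k)%nat ->
  exists ws', In ws' (words B k) /\ prod G ws' = prod G ws.
Proof.
  induction k; intros ws HB Hl.
  - destruct ws; simpl in *; [|lia]. exists nil; simpl; auto.
  - destruct ws as [|a r].
    + destruct (IHk nil) as [w0 [Hw0 Hp]]; [simpl; tauto| simpl; lia|].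
      exists (gone G :: w0). split. simpl. apply in_flat_map. exists w0. split; auto.
      apply in_map_iff. exists (gone G). auto.
      simpl. rewrite gmul_1l. auto.
    + destruct (IHk r) as [w0 [Hw0 Hp]]; [intros; apply HB; simpl; auto| simpl in Hl; lia|].
      exists (a :: w0). split. simpl. apply in_flat_map. exists w0. split; auto.
      apply in_map_iff. exists a. split; auto. apply HB; simpl; auto.
      simpl. now rewrite Hp.
Qed.

Lemma wsum_len (G : Group) w (Hw1 : forall g, (1 <= w g)%nat) (ws : list G) : (length ws <= wsum G w ws)%nat.
Proof. induction ws; simpl; auto. specialize (Hw1 a). lia. Qed.

Lemma wsum_le (G : Group) w (ws : list G) a : In a ws -> (w a <= wsum G w ws)%nat.
Proof. induction ws; simpl; [tauto|]. intros [->|H]; try lia. specialize (IHws H). lia. Qed.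

Lemma dist_metric (G : Group) w (Hw1 : forall g, (1 <= w g)%nat) (Hwinv : forall g, w (ginv G g) = w g)
  (Hfin : forall r, exists L, forall g, (w g <= r)%nat -> In g L) :
  proper_left_invariant_metric G (gdist G w).
Proof.
  unfold gdist. split; [|split].
  - split; [|split; [|split]].
    + intros; apply pos_INR.
    + intros x y. split.
      * intro H. change 0 with (INR 0) in H. apply INR_eq in H. apply ell_zero in H; auto.
        rewrite <- (g_cancel_l' G x y), H, gmul_1r. auto.
      * intros ->. rewrite gmul_Vl. replace (ell G w (gone G)) with 0%nat; auto.
        symmetry; apply ell_zero; auto.
    + intros x y. f_equal. apply Nat.le_antisymm.
      * replace (gmul G (ginv G x) y) with (ginv G (gmul G (ginv G y) x)) by (rewrite g_inv_mul, g_inv_inv; auto). apply ell_inv; auto.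
      * replace (gmul G (ginv G y) x) with (ginv G (gmul G (ginv G x) y)) by (rewrite g_inv_mul, g_inv_inv; auto). apply ell_inv; auto.
    + intros x y z. rewrite <- plus_INR. apply le_INR.
      replace (gmul G (ginv G x) z) with (gmul G (gmul G (ginv G x) y) (gmul G (ginv G y) z)).
      apply ell_mul. rewrite <- gmul_assoc, g_cancel_l'. auto.
  - intros g h k. rewrite g_inv_mul, <- gmul_assoc, g_cancel_l. auto.
  - intros x r. destruct (INR_unbounded r) as [N HN].
    destruct (Hfin N) as [L HL].
    exists (map (gmul G x) (map (prod G) (words (gone G :: L) N))).
    intros y Hy. apply in_map_iff. exists (gmul G (ginv G x) y). split. apply g_cancel_l'.
    assert (HE : (ell G w (gmul G (ginv G x) y) <= N)%nat).
    { apply INR_le. lra. }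
    destruct (ell_spec G w (gmul G (ginv G x) y)) as [[ws [H1 H2]] _].
    destruct (words_pad G (gone G :: L) (or_introl eq_refl) N ws) as [w' [Hw' Hp]].
    + intros a Ha. right. apply HL. pose proof (wsum_le G w ws a Ha). lia.
    + pose proof (wsum_len G w Hw1 ws). lia.
    + apply in_map_iff. exists w'. split; auto. congruence.
Qed.

Lemma nat_exp K : exists n, ((2*n+1)^K < 2^n)%nat.
Proof.
  set (c := (K*K+K)%nat). set (a := (K + c)%nat). exists (2^a)%nat.
  assert (H1 : (2 * 2^a + 1 <= 2^(a+2))%nat).
  { rewrite Nat.pow_add_r. simpl. pose proof (Nat.pow_gt_lin_r 2 a). lia. }
  assert (H2 : ((a+2)*K < 2^a)%nat).
  { unfold a. rewrite Nat.pow_add_r.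
    pose proof (Nat.pow_gt_lin_r 2 K ltac:(lia)). pose proof (Nat.pow_gt_lin_r 2 c ltac:(lia)).
    assert ((K+1)*(c+1) <= 2^K * 2^c)%nat by (apply Nat.mul_le_mono; lia).
    unfold c in *. nia. }
  eapply Nat.le_lt_trans. apply Nat.pow_le_mono_l. exact H1.
  rewrite <- Nat.pow_mul_r. apply Nat.pow_lt_mono_r; lia.
Qed.

Lemma gen_mono (G : Group) (S S' : list G) x : (forall a, In a S -> In a S') -> gen G S x -> gen G S' x.
Proof. intros H Hg. induction Hg; [apply gen_in; auto|apply gen_one|apply gen_mul; auto|apply gen_inv; auto]. Qed.

Fixpoint good (G : Group) (l : list G) : Prop :=
  match l with nil => True | h :: t => ~ gen G t h /\ good G t end.

Fixpoint build (G : Group) (pick : list G -> G) (n : nat) : list G :=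
  match n with O => nil | S n => pick (build G pick n) :: build G pick n end.

Lemma build_good (G : Group) pick (Hp : forall l, ~ gen G l (pick l)) n : good G (build G pick n).
Proof. induction n; simpl; auto. Qed.

Lemma build_len (G : Group) pick n : length (build G pick n) = n.
Proof. induction n; simpl; auto. Qed.

Fixpoint prods (G : Group) (l : list G) : list G :=
  match l with nil => gone G :: nil | h :: t => prods G t ++ map (fun p => gmul G p h) (prods G t) end.

Lemma prods_len (G : Group) l : length (prods G l) = (2 ^ length l)%nat.
Proof. induction l; simpl; auto. rewrite length_app, length_map, IHl. lia. Qed.

Lemma prods_gen (G : Group) l p : In p (prods G l) -> gen G l p.
Proof.
  revert p; induction l; simpl; intros p Hp.
  - destruct Hp as [<-|[]]. apply gen_one.
  - apply in_app_or in Hp. destruct Hp as [Hp|Hp].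
    + apply (gen_mono G l); simpl; auto.
    + apply in_map_iff in Hp. destruct Hp as [q [<- Hq]].
      apply gen_mul. apply (gen_mono G l); simpl; auto. apply gen_in; simpl; auto.
Qed.

Lemma prods_nodup (G : Group) l : good G l -> NoDup (prods G l).
Proof.
  induction l; simpl; intros Hg. constructor; auto. constructor.
  destruct Hg as [Ha Hg]. apply NoDup_app; auto.
  - apply NoDup_map_NoDup_ForallPairs; auto. intros x y _ _ E.
    rewrite <- (gmul_1r G x), <- (gmul_1r G y), <- (gmul_Vr G a), !gmul_assoc, E. auto.
  - intros x Hx Hy. apply in_map_iff in Hy. destruct Hy as [q [E Hq]].
    apply Ha. replace a with (gmul G (ginv G q) x).
    apply gen_mul. apply gen_inv. apply prods_gen; auto. apply prods_gen; auto.
    rewrite <- E. apply g_cancel_l.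
Qed.

Lemma chain_trans {X} (d : X -> X -> R) s a b c : scale_chain d s a b -> scale_chain d s b c -> scale_chain d s a c.
Proof. intro H; induction H; auto. intro. econstructor; eauto. Qed.

Lemma chain_sym {X} (d : X -> X -> R) s (Hs : forall x y, d x y = d y x) a b : scale_chain d s a b -> scale_chain d s b a.
Proof.
  intro H; induction H. constructor. apply (chain_trans d s _ y); auto.
  econstructor. rewrite Hs; eauto. constructor.
Qed.

Lemma chain_transl (G : Group) (d : G -> G -> R) s (Hl : forall g h k, d (gmul G g h) (gmul G g k) = d h k) g a b :
  scale_chain d s a b -> scale_chain d s (gmul G g a) (gmul G g b).
Proof. intro H; induction H. constructor. econstructor; eauto. rewrite Hl; auto. Qed.

Definition w_of (G : Group) (A : list G) (idx : G -> nat) (K : nat) (g : G) : nat :=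
  if excluded_middle_informative (In g A) then 1%nat else (S K + idx g + idx (ginv G g))%nat.

Theorem mainTheorem11 (G : Group)
  (HG : countably_infinite G) (Hlf : locally_finite G)
  (f : R -> R)
  (Hpos : forall x, 0 <= x -> 0 <= f x)
  (Hmono : forall x y, 0 <= x -> x <= y -> f x <= f y)
  (Hlim : forall M, exists N, forall x, N <= x -> M <= f x) :
  exists d : G -> G -> R,
    proper_left_invariant_metric G d /\ ~ zero_dim_control d f.
Proof.
  destruct HG as [e [Hinj Hsurj]].
  assert (Hinf : forall l : list G, exists g, ~ In g l).
  { intro l. apply NNPP. intro Hc.
    assert (Hincl : incl (map e (seq 0 (S (length l)))) l).
    { intros x _. apply NNPP. intro Hx. apply Hc. exists x. auto. }
    apply NoDup_incl_length in Hincl.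
    - rewrite length_map, length_seq in Hincl. lia.
    - apply NoDup_map_NoDup_ForallPairs. intros x y _ _; apply Hinj. apply seq_NoDup. }
  assert (Hpick : forall l : list G, {g | ~ gen G l g}).
  { intro l. apply constructive_indefinite_description.
    destruct (Hlf l) as [L HL]. destruct (Hinf L) as [g Hg]. exists g. intro; apply Hg, HL; auto. }
  set (pick := fun l => proj1_sig (Hpick l)).
  assert (Hp : forall l, ~ gen G l (pick l)) by (intro l; exact (proj2_sig (Hpick l))).
  assert (Hidx : forall g, {n | e n = g}) by (intro g; apply constructive_indefinite_description; auto).
  set (idx := fun g => proj1_sig (Hidx g)).
  assert (Hidx' : forall g, e (idx g) = g) by (intro g; exact (proj2_sig (Hidx g))).
  destruct (INR_unbounded (f 2)) as [K HK].
  destruct (nat_exp K) as [n Hn].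
  set (T := build G pick n).
  set (A := T ++ map (ginv G) T).
  assert (HAinv : forall g, In g A -> In (ginv G g) A).
  { intros g Hg. unfold A in *. apply in_app_or in Hg. apply in_or_app. destruct Hg as [Hg|Hg].
    - right. apply in_map; auto.
    - left. apply in_map_iff in Hg. destruct Hg as [h [<- Hh]]. rewrite g_inv_inv; auto. }
  set (w := w_of G A idx K).
  assert (Hw1 : forall g, (1 <= w g)%nat).
  { intro g. unfold w, w_of. destruct excluded_middle_informative; lia. }
  assert (HwA : forall g, In g A -> w g = 1%nat).
  { intros g Hg. unfold w, w_of. destruct excluded_middle_informative; tauto. }
  assert (HwK : forall g, (w g <= K)%nat -> In g A).
  { intros g Hg. unfold w, w_of in Hg. destruct excluded_middle_informative; auto. lia. }
  assert (Hwinv : forall g, w (ginv G g) = w g).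
  { intro g. unfold w, w_of. rewrite g_inv_inv.
    destruct (excluded_middle_informative (In g A)) as [H1|H1];
    destruct (excluded_middle_informative (In (ginv G g) A)) as [H2|H2]; try lia.
    - exfalso; apply H2; auto.
    - exfalso; apply H1. rewrite <- (g_inv_inv G g). auto. }
  assert (Hfin : forall r, exists L, forall g, (w g <= r)%nat -> In g L).
  { intro r. exists (A ++ map e (seq 0 (S r))). intros g Hg. apply in_or_app.
    unfold w, w_of in Hg. destruct excluded_middle_informative; auto. right.
    rewrite <- (Hidx' g). apply in_map. apply in_seq. lia. }
  pose proof (dist_metric G w Hw1 Hwinv Hfin) as Hmet.
  exists (gdist G w). split; auto.
  destruct Hmet as [[_ [_ [Hsym _]]] [Hl _]].
  assert (Hfar : exists x, gen G T x /\ (K < ell G w x)%nat).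
  { apply NNPP. intro Hc.
    assert (Hincl : incl (prods G T) (map (prod G) (words (gone G :: A) K))).
    { intros p Hp'. pose proof (prods_gen G T p Hp') as Hg.
      assert (HE : (ell G w p <= K)%nat).
      { destruct (le_lt_dec (ell G w p) K); auto. exfalso; apply Hc; eauto. }
      destruct (ell_spec G w p) as [[ws [H1 H2]] _].
      destruct (words_pad G (gone G :: A) (or_introl eq_refl) K ws) as [w' [Hw' Hpr]].
      + intros a Ha. right. apply HwK. pose proof (wsum_le G w ws a Ha). lia.
      + pose proof (wsum_len G w Hw1 ws). lia.
      + apply in_map_iff. exists w'. split; auto. congruence. }
    apply NoDup_incl_length in Hincl.
    2: { apply prods_nodup. apply build_good; auto. }
    rewrite prods_len, length_map, words_length in Hincl. simpl in Hincl.
    unfold A in Hincl. rewrite length_app, length_map in Hincl. unfold T in Hincl.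
    rewrite build_len in Hincl.
    replace (S (n + n)) with (2*n+1)%nat in Hincl by lia. lia. }
  destruct Hfar as [x [Hx HxK]].
  assert (Hch : forall y, gen G T y -> scale_chain (gdist G w) 2 (gone G) y).
  { intros y Hy. induction Hy.
    - econstructor; [|constructor]. unfold gdist. rewrite g_inv_one, gmul_1l.
      assert (In x0 A) by (apply in_or_app; auto).
      destruct (ell_spec G w x0) as [_ Hm].
      assert (HW1 : Wt G w x0 1%nat). { exists (x0 :: nil). simpl. rewrite gmul_1r, HwA; auto. }
      specialize (Hm 1%nat HW1). apply le_INR in Hm. simpl in Hm. lra.
    - constructor.
    - apply (chain_trans _ _ _ x0); auto.
      pose proof (chain_transl G (gdist G w) 2 Hl x0 _ _ IHHy2). rewrite gmul_1r in H. auto.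
    - apply (chain_sym _ _ Hsym).
      pose proof (chain_transl G (gdist G w) 2 Hl (ginv G x0) _ _ IHHy). rewrite gmul_1r, gmul_Vl in H. auto. }
  intro Hz. specialize (Hz 2 ltac:(lra) (gone G) x (Hch x Hx)).
  unfold gdist in Hz. rewrite g_inv_one, gmul_1l in Hz.
  apply lt_INR in HxK. lra.
Qed.
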